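(* Let $\mathfrak{U}$ be a Banach algebra which coincides with the smallest closed subalgebra of $\mathfrak{U}$ containing every closed subalgebra $\mathfrak{V}\subseteq\mathfrak{U}$ for which $\mathfrak{V}^\sharp$ is symmetrically pseudo-amenable. Then for every Banach $\mathfrak{U}$-bimodule $X$, every bounded central derivation $\delta:\mathfrak{U}\to X$ is identically zero.
   Context: $\mathfrak{V}^\sharp=\mathfrak{V}\oplus\mathbb{C}1$ is the unitization of $\mathfrak{V}$ with the $\ell^1$-norm (a unit is adjoined even if $\mathfrak{V}$ is unital). A derivation $\delta:\mathfrak{U}\to X$ is central if $\delta(\mathfrak{U})\subseteq\mathcal{Z}_{\mathfrak{U}}(X)=\{x\in X: ax=xa\ \forall a\in\mathfrak{U}\}$; a derivation is a linear map with $\delta(ab)=\delta(a)b+a\delta(b)$. For a Banach algebra $\mathfrak{A}$, $\mathfrak{A}\widehat{\otimes}\mathfrak{A}$ is the projective tensor product with $a(b\otimes c)=ab\otimes c$, $(b\otimes c)a=b\otimes ca$, $\pi(b\otimes c)=bc$ (extended linearly and continuously); the flip is $(b\otimes c)^\circ=c\otimes b$ and $\mathbf{t}$ is symmetric if $\mathbf{t}^\circ=\mathbf{t}$. A symmetric approximate diagonal is a net $\{\mathbf{t}_\lambda\}$ (not necessarily bounded) of symmetric elements with $a\mathbf{t}_\lambda-\mathbf{t}_\lambda a\to0$ and $\pi(\mathbf{t}_\lambda)a\to a$ for all $a\in\mathfrak{A}$; $\mathfrak{A}$ is symmetrically pseudo-amenable if it has one. *)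

(* Defs.v *)
From HB Require Import structures.
From mathcomp Require Import all_boot all_order all_algebra.
From mathcomp Require Import all_classical all_reals topology normedtype sequences.
From mathcomp Require Export complex.
Set Implicit Arguments. Unset Strict Implicit. Unset Printing Implicit Defensive.
Import Order.TTheory GRing.Theory Num.Theory numFieldNormedType.Exports.
Local Open Scope ring_scope.
Local Open Scope classical_set_scope.

Section BanachDefs.
Variable K : numFieldType.

Definition banach_algebra (U : completeNormedModType K) (mul : U -> U -> U) : Prop :=
  ((forall a b c, mul a (b + c) = mul a b + mul a c) /\
      (forall a b c, mul (a + b) c = mul a c + mul b c) /\
      (forall (k : K) a b, mul (k *: a) b = k *: mul a b) /\
      (forall (k : K) a b, mul a (k *: b) = k *: mul a b) /\
      (forall a b c, mul a (mul b c) = mul (mul a b) c) /\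
      (forall a b, `|mul a b| <= `|a| * `|b|)).

Definition closed_subalgebra (U : completeNormedModType K) (mul : U -> U -> U)
  (W : set U) : Prop :=
  (closed W /\ W 0 /\
      (forall x y, W x -> W y -> W (x + y)) /\
      (forall (k : K) x, W x -> W (k *: x)) /\
      (forall x y, W x -> W y -> W (mul x y))).

Definition gen_closed_subalgebra (U : completeNormedModType K) (mul : U -> U -> U)
  (S : set U) : set U :=
  \bigcap_(W in [set W | closed_subalgebra mul W /\ S `<=` W]) W.

(** The unitization V^# = V (+) K 1, with the l^1 norm, realized on pairs
    (v, l) : U * K with v in V. *)
Section Unitization.
Variables (U : completeNormedModType K) (mul : U -> U -> U) (V : set U).

Definition inU (x : U * K) : Prop := V x.1.
Definition addU (x y : U * K) : U * K := (x.1 + y.1, x.2 + y.2).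
Definition subU (x y : U * K) : U * K := (x.1 - y.1, x.2 - y.2).
Definition scaleU (k : K) (x : U * K) : U * K := (k *: x.1, k * x.2).
Definition mulU (x y : U * K) : U * K :=
  (mul x.1 y.1 + x.2 *: y.1 + y.2 *: x.1, x.2 * y.2).
Definition normU (x : U * K) : K := `|x.1| + `|x.2|.

(** Bounded bilinear forms V^# x V^# -> K of norm <= 1, i.e. the unit ball of
    the dual of the projective tensor product V^# (^x) V^#. *)
Definition unit_bilin (B : U * K -> U * K -> K) : Prop :=
  ((forall (k : K) x y z, inU x -> inU y -> inU z ->
         B (addU (scaleU k x) y) z = k * B x z + B y z) /\
      (forall (k : K) x y z, inU x -> inU y -> inU z ->
         B z (addU (scaleU k x) y) = k * B z x + B z y) /\
      (forall x y, inU x -> inU y -> `|B x y| <= normU x * normU y)).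

(** An element of V^# (^x) V^# is represented by sum_n b n (x) c n with
    sum_n ||b n|| ||c n|| < oo. *)
Definition tensor_rep (b c : nat -> U * K) : Prop :=
  (forall n, inU (b n)) /\ (forall n, inU (c n)) /\
  exists M : K, forall N, \sum_(n < N) normU (b n) * normU (c n) <= M.

Definition tensor_eval (B : U * K -> U * K -> K) (b c : nat -> U * K) : K :=
  limn (series (fun n => B (b n) (c n))).

Definition tensor_pi (b c : nat -> U * K) : U * K :=
  (limn (series (fun n => (mulU (b n) (c n)).1)),
   limn (series (fun n => (mulU (b n) (c n)).2))).

(** V^# is symmetrically pseudo-amenable: there is a net (t_l) in
    V^# (^x) V^# of symmetric elements with a t_l - t_l a -> 0 and
    pi(t_l) a -> a for every a in V^#.  Nets are indexed by directed sets;
    equality / norm in the projective tensor product are expressed through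
    the norm-one bounded bilinear forms (the unit ball of its dual). *)
Definition unitization_sym_pseudo_amenable : Prop :=
  exists (I : Type) (le : I -> I -> Prop) (b c : I -> nat -> U * K),
    ((exists i : I, True) /\
        (forall i j k, le i j -> le j k -> le i k) /\
        (forall i j, exists k, le i k /\ le j k) /\
        (forall i, tensor_rep (b i) (c i)) /\
        (forall i B, unit_bilin B -> tensor_eval B (b i) (c i) = tensor_eval B (c i) (b i)) /\
        (forall a, inU a -> forall eps : K, 0 < eps -> exists i0, forall i, le i0 i ->
           forall B, unit_bilin B ->
             `|tensor_eval B (fun n => mulU a (b i n)) (c i)
               - tensor_eval B (b i) (fun n => mulU (c i n) a)| <= eps) /\
        (forall a, inU a -> forall eps : K, 0 < eps -> exists i0, forall i, le i0 i ->
           normU (subU (mulU (tensor_pi (b i) (c i)) a) a) <= eps)).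
End Unitization.

Definition banach_bimodule (U X : completeNormedModType K) (mul : U -> U -> U)
  (lm : U -> X -> X) (rm : X -> U -> X) : Prop :=
  ((forall a x y, lm a (x + y) = lm a x + lm a y) /\
      (forall a b x, lm (a + b) x = lm a x + lm b x) /\
      (forall (k : K) a x, lm (k *: a) x = k *: lm a x /\ lm a (k *: x) = k *: lm a x) /\
      (forall a x y, rm (x + y) a = rm x a + rm y a) /\
      (forall a b x, rm x (a + b) = rm x a + rm x b) /\
      (forall (k : K) a x, rm x (k *: a) = k *: rm x a /\ rm (k *: x) a = k *: rm x a) /\
      (forall a b x, lm a (lm b x) = lm (mul a b) x /\ rm (rm x a) b = rm x (mul a b)
                     /\ rm (lm a x) b = lm a (rm x b)) /\
      (exists C : K, forall a x, `|lm a x| <= C * `|a| * `|x| /\ `|rm x a| <= C * `|a| * `|x|)).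

Definition derivation (U X : completeNormedModType K) (mul : U -> U -> U)
  (lm : U -> X -> X) (rm : X -> U -> X) (d : U -> X) : Prop :=
  ((forall a b, d (a + b) = d a + d b) /\
      (forall (k : K) a, d (k *: a) = k *: d a) /\
      (forall a b, d (mul a b) = rm (d a) b + lm a (d b))).

Definition bounded_map (U X : completeNormedModType K) (d : U -> X) : Prop :=
  exists C : K, forall a, `|d a| <= C * `|a|.

Definition central_map (U X : completeNormedModType K)
  (lm : U -> X -> X) (rm : X -> U -> X) (d : U -> X) : Prop :=
  forall a b, lm a (d b) = rm (d b) a.

End BanachDefs.

(* Main.v *)
Require Import Defs.
Set Implicit Arguments. Unset Strict Implicit. Unset Printing Implicit Defensive.
From HB Require Import structures.
From mathcomp Require Import all_boot all_order all_algebra.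
From mathcomp Require Import all_classical all_reals topology normedtype sequences.
From mathcomp Require Import complex.
From mathcomp Require Import ring lra.
Import Order.TTheory GRing.Theory Num.Theory numFieldNormedType.Exports.
Local Open Scope ring_scope.
Local Open Scope classical_set_scope.
Local Open Scope complex_scope.
Section HBsec.
Variable R : realType.
Variable X : normedModType R[i].

Definition rs (r : R) (x : X) : X := r%:C *: x.
Definition NN (x : X) : R := complex.Re `|x|.

Lemma normE (x : X) : `|x| = (NN x)%:C.
Proof.
rewrite /NN; symmetry; apply: RRe_real; exact: ger0_real.
Qed.

Lemma NN_ge0 x : 0 <= NN x.
Proof. by rewrite -ler0c -normE. Qed.

Lemma NN_add x y : NN (x + y) <= NN x + NN y.
Proof. by rewrite -lecR rmorphD /= -!normE ler_normD. Qed.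

Lemma normC_real (r : R) : `|r%:C| = `|r|%:C.
Proof. by rewrite normc_def /= expr0n /= addr0 sqrtr_sqr. Qed.

Lemma NN_scale r x : NN (rs r x) = `|r| * NN x.
Proof.
apply: complexI; rewrite rmorphM /= -!normE /rs normrZ normC_real //.
Qed.

Lemma NN_eq0 x : NN x = 0 -> x = 0.
Proof. by move=> h; apply/normr0_eq0; rewrite normE h. Qed.

Lemma rsD r x y : rs r (x + y) = rs r x + rs r y.
Proof. by rewrite /rs scalerDr. Qed.
Lemma rsDl r s x : rs (r + s) x = rs r x + rs s x.
Proof. by rewrite /rs rmorphD scalerDl. Qed.
Lemma rsA r s x : rs r (rs s x) = rs (r * s) x.
Proof. by rewrite /rs rmorphM scalerA. Qed.
Lemma rs0 x : rs 0 x = 0.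
Proof. by rewrite /rs rmorph0 scale0r. Qed.
Lemma rs1 x : rs 1 x = x.
Proof. by rewrite /rs rmorph1 scale1r. Qed.
Lemma rsN1 x : rs (-1) x = - x.
Proof. by rewrite /rs rmorphN rmorph1 scaleN1r. Qed.
Lemma rsN r x : rs (- r) x = - rs r x.
Proof. by rewrite /rs rmorphN scaleNr. Qed.
Lemma NNN x : NN (- x) = NN x.
Proof. by rewrite /NN normrN. Qed.

End HBsec.
Section HBmain.
Variable R : realType.
Variable X : normedModType R[i].
Local Notation rs := (@rs R X).
Local Notation NN := (@NN R X).

Definition good (G : set (X * R)) :=
  [/\ (forall x r s, G (x,r) -> G (x,s) -> r = s),
      (forall x y r s, G (x,r) -> G (y,s) -> G (x + y, r + s)),
      (forall a x r, G (x,r) -> G (rs a x, a * r)) &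
      (forall x r, G (x,r) -> r <= NN x)].

Lemma good_union (F : set (set (X * R))) : (forall A, F A -> good A) ->
  total_on F subset -> good (\bigcup_(A in F) A).
Proof.
move=> Fg tot; split.
- move=> x r s [A FA Ar] [B FB Bs]; have [AB|BA] := tot _ _ FA FB.
  + by have [h _ _ _] := Fg _ FB; apply: h (AB _ Ar) Bs.
  + by have [h _ _ _] := Fg _ FA; apply: h Ar (BA _ Bs).
- move=> x y r s [A FA Ar] [B FB Bs]; have [AB|BA] := tot _ _ FA FB.
  + by exists B => //; have [_ h _ _] := Fg _ FB; apply: h (AB _ Ar) Bs.
  + by exists A => //; have [_ h _ _] := Fg _ FA; apply: h Ar (BA _ Bs).
- move=> a x r [A FA Ar]; exists A => //; have [_ _ h _] := Fg _ FA; exact: h.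
- move=> x r [A FA Ar]; have [_ _ _ h] := Fg _ FA; exact: h.
Qed.

Lemma good_zero G : good G -> G !=set0 -> G (0, 0).
Proof.
move=> [_ _ h _] [[x r] Gxr]; have := h 0 _ _ Gxr.
by rewrite rs0 mul0r.
Qed.

Lemma good_sub G x r y s : good G -> G (x, r) -> G (y, s) -> G (x - y, r - s).
Proof.
move=> [_ hD hS _] Gx Gy; have := hS (-1) _ _ Gy; rewrite rsN1 mulN1r => Gy'.
exact: hD Gx Gy'.
Qed.

Lemma good_extend G y : good G -> G (0,0) -> ~ (exists r, G (y, r)) ->
  exists G', good G' /\ G `<` G'.
Proof.
move=> gG G00 ny; have [Gf GD GS Gd] := gG.
pose S := [set v | exists w r, G (w, r) /\ v = r - NN (w - y)].
have S0 : S !=set0 by exists (0 - NN (0 - y)); exists 0, 0.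
have ubS : forall u r', G (u, r') -> ubound S (NN (u + y) - r').
  move=> u r' Gu _ [w [r [Gw ->]]].
  rewrite lerBrDr addrAC lerBlDr.
  apply: le_trans (Gd _ _ (GD _ _ _ _ Gw Gu)) _.
  have -> : w + u = (w - y) + (u + y) by rewrite addrCA subrK addrC.
  by apply: le_trans (NN_add _ _); rewrite addrC.
have hsup : has_sup S by split => //; exists (NN (0 + y) - 0); apply: ubS G00.
pose c := sup S.
have c_ge : forall w r, G (w, r) -> r - NN (w - y) <= c.
  by move=> w r Gw; apply: sup_upper_bound => //; exists w, r.
have c_le : forall u r', G (u, r') -> c <= NN (u + y) - r'.
  by move=> u r' Gu; apply: ge_sup => //; apply: ubS.
pose G' := [set p | exists x r t, G (x, r) /\ p = (x + rs t y, r + t * c)].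
exists G'; split; last first.
  split.
    by move=> [x r] Gx; exists x, r, 0; rewrite rs0 mul0r !addr0.
  move=> /(_ (y, c)) h; apply: ny; exists c; apply: h.
  by exists 0, 0, 1; rewrite rs1 mul1r !add0r.
split.
- move=> x r s [x1 [r1 [t1 [G1 [-> ->]]]]] [x2 [r2 [t2 [G2 [E ->]]]]].
  have [et|nt] := eqVneq t1 t2.
    rewrite et in E *; have E2 := addIr _ E; rewrite E2 in G1.
    by rewrite (Gf _ _ _ G1 G2).
  exfalso; apply: ny.
  have Gd' := good_sub gG G2 G1.
  have E' : x2 - x1 = rs (t1 - t2) y.
    have -> : x2 = x1 + rs t1 y - rs t2 y by rewrite E addrK.
    by rewrite addrAC [x1 + _]addrC addrK rsDl rsN.
  exists ((t1 - t2)^-1 * (r2 - r1)).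
  have := GS (t1 - t2)^-1 _ _ Gd'; rewrite E' rsA mulVf ?rs1 //.
  by rewrite subr_eq0.
- move=> x x' r r' [x1 [r1 [t1 [G1 [-> ->]]]]] [x2 [r2 [t2 [G2 [-> ->]]]]].
  exists (x1 + x2), (r1 + r2), (t1 + t2); split; first exact: GD.
  congr (_, _).
    by rewrite rsDl addrACA.
  by rewrite mulrDl addrACA.
- move=> a x r [x1 [r1 [t1 [G1 [-> ->]]]]].
  exists (rs a x1), (a * r1), (a * t1); split; first exact: GS.
  by rewrite rsD rsA mulrDr mulrA.
- move=> x r [x1 [r1 [t1 [G1 [-> ->]]]]].
  have [t0|tn0] := eqVneq t1 0.
    by rewrite t0 rs0 mul0r !addr0; apply: Gd.
  have [tgt|tlt] := ltP 0 t1.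
  + pose u := rs t1^-1 x1.
    have Gu : G (u, t1^-1 * r1) by apply: GS.
    have hx1 : x1 = rs t1 u by rewrite /u rsA mulfV // rs1.
    have := c_le _ _ Gu => hc.
    rewrite hx1 -rsD NN_scale gtr0_norm //.
    have -> : r1 = t1 * (t1^-1 * r1) by rewrite mulrA mulfV ?mul1r.
    rewrite -mulrDr ler_pM2l // addrC -lerBrDr //.
  + have tlt' : t1 < 0 by rewrite lt_neqAle tn0.
    pose s := - t1.
    have sgt : 0 < s by rewrite oppr_gt0.
    pose w := rs s^-1 x1.
    have Gw : G (w, s^-1 * r1) by apply: GS.
    have hx1 : x1 = rs s w by rewrite /w rsA mulfV ?rs1 // gt_eqF.
    have hc := c_ge _ _ Gw.
    have -> : x1 + rs t1 y = rs s (w - y).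
      by rewrite rsD hx1 -rsN1 !rsA /s mulrN1 opprK.
    rewrite NN_scale gtr0_norm //.
    have -> : r1 = s * (s^-1 * r1) by rewrite mulrA mulfV ?mul1r // gt_eqF.
    have -> : t1 = - s by rewrite opprK.
    have -> : s * (s^-1 * r1) + - s * c = s * (s^-1 * r1 - c).
      by ring.
    rewrite ler_pM2l //.
    by rewrite lerBlDr -lerBlDl.
Qed.

Lemma real_HB (x0 : X) : x0 != 0 -> exists g : X -> R,
  [/\ (forall x y, g (x + y) = g x + g y), (forall r x, g (rs r x) = r * g x),
      (forall x, g x <= NN x) & g x0 = NN x0].
Proof.
move=> x0n0.
pose G0 := [set p | exists a, p = (rs a x0, a * NN x0)].
have gG0 : good G0.
  split.
  - move=> x r s [a [-> ->]] [b [E ->]].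
    have : rs (a - b) x0 = 0 by rewrite rsDl rsN E subrr.
    rewrite /rs => /eqP; rewrite scaler_eq0 (negbTE x0n0) orbF => /eqP.
    rewrite -(rmorph0 (real_complex R)) => /complexI /eqP.
    by rewrite subr_eq0 => /eqP ->.
  - move=> x y r s [a [-> ->]] [b [-> ->]].
    by exists (a + b); rewrite rsDl mulrDl.
  - move=> c x r [a [-> ->]].
    by exists (c * a); rewrite rsA mulrA.
  - move=> x r [a [-> ->]].
    by rewrite NN_scale ler_wpM2r ?NN_ge0 ?ler_norm.
pose P := fun G => good G /\ (G = set0 \/ G0 `<=` G).
have [A [[gA hA] maxA]] : exists A, P A /\ forall B, A `<` B -> ~ P B.
  apply: Zorn_bigcup => F FP tot; split.
    by apply: good_union => // A /FP [].
  have [[A [FA sA]]|nA] := pselect (exists A, F A /\ G0 `<=` A).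
    by right; apply: subset_trans sA _; apply: bigcup_sup.
  left; apply/seteqP; split => // p [A FA Ap].
  have [_ [eA|sA]] := FP _ FA; first by rewrite eA in Ap.
  by exfalso; apply: nA; exists A.
have G0x0 : G0 (x0, NN x0) by exists 1; rewrite rs1 mul1r.
have sA : G0 `<=` A.
  case: hA => // eA; exfalso; apply: (maxA G0); last by split => //; right.
  rewrite eA; split => // /(_ _ G0x0) //.
have A00 : A (0, 0) by apply: good_zero => //; exists (x0, NN x0); apply: sA.
have tot : forall y, exists r, A (y, r).
  move=> y; apply: contrapT => ny.
  have [G' [gG' AG']] := good_extend gA A00 ny.
  apply: (maxA G' AG'); split => //; right.
  by apply: subset_trans sA (properW AG').
have [Af AD AS Ad] := gA.
pose g y := projT1 (cid (tot y)).
have Ag : forall y, A (y, g y) by move=> y; exact: (projT2 (cid (tot y))).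
exists g; split.
- by move=> x y; apply: Af (Ag _) (AD _ _ _ _ (Ag x) (Ag y)).
- by move=> r x; apply: Af (Ag _) (AS r _ _ (Ag x)).
- by move=> x; apply: Ad.
- by apply: Af (Ag _) (sA _ G0x0).
Qed.
End HBmain.
Section Csep.
Variable R : realType.
Variable X : normedModType R[i].

Lemma normi : `|'i%C : R[i]| = 1.
Proof. by rewrite normc_def /= expr0n expr1n add0r sqrtr1. Qed.

Lemma Re_sep (a b : R) : complex.Re (a%:C - 'i%C * b%:C) = a.
Proof. by rewrite /= mul0r mulr0 subrr subr0. Qed.

Lemma complex_sep (x0 : X) : x0 != 0 -> exists h : X -> R[i],
  [/\ (forall x y, h (x + y) = h x + h y), (forall k x, h (k *: x) = k * h x),
      (forall x, `|h x| <= 2 * `|x|) & h x0 != 0].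
Proof.
move=> x0n0; have [g [gD gS gN gx0]] := real_HB x0n0.
have gN' : forall x : X, g (- x) = - g x.
  by move=> x; rewrite -rsN1 gS mulN1r.
have gabs : forall x : X, `|g x| <= NN x.
  move=> x; rewrite ler_norml gN andbT lerNl -gN' -(NNN x); exact: gN.
have NNi : forall x : X, NN ('i%C *: x) = NN x.
  by move=> x; apply: complexI; rewrite -!normE normrZ normi mul1r.
exists (fun y => (g y)%:C - 'i%C * (g ('i%C *: y))%:C); split.
- by move=> x y; rewrite scalerDr !gD !rmorphD /=; ring.
- move=> k x; rewrite [k]complexE.
  set a := complex.Re k; set b := complex.Im k.
  have -> : (a%:C + 'i%C * b%:C) *: x = rs a x + rs b ('i%C *: x).
    by rewrite /rs scalerDl scalerA mulrC -scalerA.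
  rewrite gD !gS scalerDr gD /rs !scalerA.
  have -> : 'i%C * a%:C = a%:C * 'i%C by rewrite mulrC.
  have -> : 'i%C * b%:C * 'i%C = (- b)%:C.
    by rewrite mulrC mulrA -expr2 sqr_i rmorphN mulN1r.
  rewrite -!scalerA -/(rs a _) -/(rs (-b) _) !gS.
  rewrite !rmorphD !rmorphM !rmorphN /=.
  have hi : 'i%C * 'i%C = -1 :> R[i] by rewrite -expr2 sqr_i.
  have e : forall u v : R[i], 'i%C * u * ('i%C * v) = - (u * v).
    by move=> u v; rewrite mulrACA hi mulN1r.
  rewrite !mulrDl !mulrBr e; ring.
- move=> x; apply: le_trans (ler_normB _ _) _.
  rewrite normrM normi mul1r !normC_real normE.
  rewrite -(rmorphD (real_complex R)) mulr2n mulrDl mul1r -rmorphD /= lecR.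
  by apply: lerD; rewrite ?gabs // -(NNi x) gabs.
- apply/eqP => /(congr1 (@complex.Re R)); rewrite Re_sep /= gx0 => /NN_eq0.
  by apply/eqP.
Qed.
End Csep.
Section Ana.
Variable R : realType.
Local Notation K := (R[i]).

Lemma bound_abs (V1 V2 : normedModType K) (f : V1 -> V2) (C : K) :
  (forall x, `|f x| <= C * `|x|) -> forall x, `|f x| <= `|C| * `|x|.
Proof.
move=> h x; have hx := h x; have h0 : 0 <= C * `|x| by apply: le_trans hx.
by rewrite -(normr_id x) -normrM ger0_norm.
Qed.

Lemma add0_lin (V1 V2 : zmodType) (f : V1 -> V2) :
  (forall x y, f (x + y) = f x + f y) -> f 0 = 0.
Proof. by move=> h; apply: (@addrI _ (f 0)); rewrite -h !addr0. Qed.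

Lemma sub_lin (V1 V2 : zmodType) (f : V1 -> V2) :
  (forall x y, f (x + y) = f x + f y) -> forall x y, f (x - y) = f x - f y.
Proof.
move=> h x y; apply/eqP; rewrite eq_sym subr_eq -h subrK //.
Qed.

Lemma sum_lin (V1 V2 : zmodType) (f : V1 -> V2) (u : nat -> V1) N :
  (forall x y, f (x + y) = f x + f y) ->
  f (\sum_(0 <= k < N) u k) = \sum_(0 <= k < N) f (u k).
Proof.
move=> h; elim: N => [|N IH]; first by rewrite !big_geq // (add0_lin h).
by rewrite !big_nat_recr //= h IH.
Qed.

Lemma series_lin (V1 V2 : zmodType) (f : V1 -> V2) (u : nat -> V1) :
  (forall x y, f (x + y) = f x + f y) ->
  series (fun n => f (u n)) = (fun N => f (series u N)).
Proof. by move=> h; apply: funext => N; rewrite /series /= sum_lin. Qed.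

Lemma lin_cvg (V1 V2 : normedModType K) (f : V1 -> V2) (C : K) (u : nat -> V1) l :
  (forall x y, f (x + y) = f x + f y) -> (forall x, `|f x| <= C * `|x|) ->
  u @ \oo --> l -> (fun n => f (u n)) @ \oo --> f l.
Proof.
move=> hD hC /cvgrPdist_le ul; apply/cvgrPdist_le => e e0.
have hC' := bound_abs hC.
have C1 : 0 < `|C| + 1 by rewrite ltr_wpDl.
have := ul (e / (`|C| + 1)) (divr_gt0 e0 C1).
apply: filterS => n hn.
rewrite -(sub_lin hD); apply: le_trans (hC' _) _.
apply: le_trans (_ : (`|C| + 1) * `|l - u n| <= e).
  by rewrite ler_wpM2r // lerDl.
by rewrite mulrC -ler_pdivlMr.
Qed.

Lemma lin_lim (V1 V2 : normedModType K) (f : V1 -> V2) (C : K) (u : nat -> V1) :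
  (forall x y, f (x + y) = f x + f y) -> (forall x, `|f x| <= C * `|x|) ->
  cvgn (series u) ->
  cvgn (series (fun n => f (u n))) /\
  limn (series (fun n => f (u n))) = f (limn (series u)).
Proof.
move=> hD hC cu; rewrite (series_lin _ hD).
have := lin_cvg hD hC cu => h; split; first by apply/cvg_ex; eexists; exact: h.
exact: cvg_lim h.
Qed.

Lemma abs_cvg (X : completeNormedModType K) (u : nat -> X) (w : nat -> R) (M : R) :
  (forall n, `|u n| <= (w n)%:C) -> (forall N, \sum_(0 <= n < N) w n <= M) ->
  cvgn (series u).
Proof.
move=> huw hM.
have w0 : forall n, 0 <= w n by move=> n; rewrite -ler0c; apply: le_trans (huw n).
have cw : cvgn (series w).
  apply: nondecreasing_is_cvgn.
    exact: (@nondecreasing_series _ w xpredT 0 (fun n _ _ => w0 n)).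
  by exists M => _ [n _ <-]; apply: hM.
move/cauchy_cvgP/cauchy_seriesP: cw => cw.
apply/cauchy_cvgP/cauchy_seriesP => e e0.
have eR : e = (complex.Re e)%:C by symmetry; apply: RRe_real; exact: gtr0_real.
have re0 : 0 < complex.Re e by rewrite -ltcR -eR.
apply: filterS (cw _ re0) => n hn.
apply: le_lt_trans (ler_norm_sum _ _ _) _.
apply: (@le_lt_trans _ _ (\sum_(n.1 <= k < n.2) (w k)%:C)).
  by apply: ler_sum => k _; apply: huw.
rewrite -rmorph_sum eR ltcR; apply: le_lt_trans hn; exact: ler_norm.
Qed.

End Ana.
Section Alg.
Variable R : realType.
Local Notation K := (R[i]).
Variables (U : completeNormedModType K) (mul : U -> U -> U).
Hypothesis HU : banach_algebra mul.
Variables (X : completeNormedModType K) (lm : U -> X -> X) (rm : X -> U -> X).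
Hypothesis HX : banach_bimodule mul lm rm.
Variable d : U -> X.
Hypothesis Hd : derivation mul lm rm d.
Hypothesis Hc : central_map lm rm d.

Definition Dp (p : U * K) : X := d p.1.
Definition lmU (p : U * K) (x : X) : X := lm p.1 x + p.2 *: x.
Definition rmU (x : X) (p : U * K) : X := rm x p.1 + p.2 *: x.
Local Notation mulU := (mulU mul).

Lemma lmDr a x y : lm a (x + y) = lm a x + lm a y.
Proof. by have [h _] := HX. Qed.
Lemma lmDl a b x : lm (a + b) x = lm a x + lm b x.
Proof. by have [_ [h _]] := HX. Qed.
Lemma lmZl (k : K) a x : lm (k *: a) x = k *: lm a x.
Proof. by have [_ [_ [h _]]] := HX; case: (h k a x). Qed.
Lemma lmZr (k : K) a x : lm a (k *: x) = k *: lm a x.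
Proof. by have [_ [_ [h _]]] := HX; case: (h k a x). Qed.
Lemma rmDl a x y : rm (x + y) a = rm x a + rm y a.
Proof. by have [_ [_ [_ [h _]]]] := HX. Qed.
Lemma rmDr a b x : rm x (a + b) = rm x a + rm x b.
Proof. by have [_ [_ [_ [_ [h _]]]]] := HX. Qed.
Lemma rmZr (k : K) a x : rm x (k *: a) = k *: rm x a.
Proof. by have [_ [_ [_ [_ [_ [h _]]]]]] := HX; case: (h k a x). Qed.
Lemma rmZl (k : K) a x : rm (k *: x) a = k *: rm x a.
Proof. by have [_ [_ [_ [_ [_ [h _]]]]]] := HX; case: (h k a x). Qed.
Lemma lmA a b x : lm a (lm b x) = lm (mul a b) x.
Proof. by have [_ [_ [_ [_ [_ [_ [h _]]]]]]] := HX; case: (h a b x). Qed.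
Lemma rmA a b x : rm (rm x a) b = rm x (mul a b).
Proof. by have [_ [_ [_ [_ [_ [_ [h _]]]]]]] := HX; case: (h a b x) => _ []. Qed.
Lemma rlmA a b x : rm (lm a x) b = lm a (rm x b).
Proof. by have [_ [_ [_ [_ [_ [_ [h _]]]]]]] := HX; case: (h a b x) => _ []. Qed.

Lemma HUp :
  [/\ (forall a b c, mul a (b + c) = mul a b + mul a c),
      (forall a b c, mul (a + b) c = mul a c + mul b c),
      (forall (k : K) a b, mul (k *: a) b = k *: mul a b),
      (forall (k : K) a b, mul a (k *: b) = k *: mul a b) &
      (forall a b, `|mul a b| <= `|a| * `|b|)].
Proof. by have [h1 [h2 [h3 [h4 [_ h6]]]]] := HU; split. Qed.

Lemma Hdp :
  [/\ (forall a b, d (a + b) = d a + d b),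
      (forall (k : K) a, d (k *: a) = k *: d a) &
      (forall a b, d (mul a b) = rm (d a) b + lm a (d b))].
Proof. by have [h1 [h2 h3]] := Hd; split. Qed.

Lemma R1 x b c : rmU (rmU x b) c = rmU x (mulU b c).
Proof.
rewrite /rmU /mulU /= rmDl rmZl rmA !rmDr !rmZr scalerDr !scalerA.
rewrite (mulrC c.2 b.2). by rewrite !addrA.
Qed.

Lemma R2 x b c : lmU b (lmU c x) = lmU (mulU b c) x.
Proof.
rewrite /lmU /mulU /= lmDr lmZr lmA !lmDl !lmZl scalerDr !scalerA.
by rewrite !addrA (addrAC (lm (mul b.1 c.1) x)).
Qed.

Lemma R3 x b c : lmU b (rmU x c) = rmU (lmU b x) c.
Proof.
rewrite /lmU /rmU /= lmDr lmZr rmDl rmZl rlmA scalerDr scalerDr !scalerA.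
by rewrite (mulrC c.2 b.2) !addrA (addrAC (lm b.1 (rm x c.1))).
Qed.

Lemma R4 p q : lmU p (Dp q) = rmU (Dp q) p.
Proof. by rewrite /lmU /rmU /Dp Hc. Qed.

Lemma R5 b c : Dp (mulU b c) = rmU (Dp b) c + lmU b (Dp c).
Proof.
have [dD dZ dM] := Hdp.
rewrite /Dp /rmU /lmU /mulU /= !dD !dZ dM.
by rewrite !addrA (addrAC (rm (d b.1) c.1) (c.2 *: d b.1)) (addrAC (rm (d b.1) c.1 + lm b.1 (d c.1)) (c.2 *: d b.1)).
Qed.

Lemma zac (V : zmodType) (A B C B' C' : V) :
  (A + B - C) - (B' - (C' + A)) = A + A + (B - B') - (C - C').
Proof.
rewrite opprB opprD opprK [C' + A]addrC !addrA.
by rewrite (addrAC (A + B) (- C) A) (addrAC A B A) (addrAC (A + A + B - C) C' (- B')) (addrAC (A + A + B) (- C) (- B')).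
Qed.

Lemma rmU_addx x y p : rmU (x + y) p = rmU x p + rmU y p.
Proof. by rewrite /rmU rmDl scalerDr addrACA. Qed.

Lemma lmU_addx b x y : lmU b (x + y) = lmU b x + lmU b y.
Proof. by rewrite /lmU lmDr scalerDr addrACA. Qed.

Lemma rmU_subp x p q : rmU x (subU p q) = rmU x p - rmU x q.
Proof.
rewrite /rmU /subU /= (sub_lin (fun a b => rmDr a b x)) scalerBl.
by rewrite opprD addrACA.
Qed.

Definition PhiB (b c : U * K) : X := rmU (Dp b) c - lmU b (Dp c).
Definition PhiE (ap b c : U * K) : X := rmU (Dp b) (subU (mulU ap c) (mulU c ap)).

Lemma key_identity ap b c :
  PhiB (mulU ap b) c - PhiB b (mulU c ap) =
  rmU (Dp ap) (mulU b c) + rmU (Dp ap) (mulU b c) + PhiE ap b c - PhiE ap c b.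
Proof.
rewrite /PhiB /PhiE !rmU_subp.
rewrite R5 R4 rmU_addx !R1 R4.
rewrite R5 lmU_addx R3 R2 R4 R4 R1.
exact: zac.
Qed.

End Alg.
Section Lin.
Variable R : realType.
Local Notation K := (R[i]).
Variables (U : completeNormedModType K) (mul : U -> U -> U).
Hypothesis HU : banach_algebra mul.
Variables (X : completeNormedModType K) (lm : U -> X -> X) (rm : X -> U -> X).
Hypothesis HX : banach_bimodule mul lm rm.
Variable d : U -> X.
Hypothesis Hd : derivation mul lm rm d.
Hypothesis Hc : central_map lm rm d.
Variables (cd cm : K).
Hypothesis cd0 : 0 <= cd.
Hypothesis cm0 : 0 <= cm.
Hypothesis Hcd : forall a, `|d a| <= cd * `|a|.
Hypothesis Hlm : forall a x, `|lm a x| <= cm * `|a| * `|x|.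
Hypothesis Hrm : forall a x, `|rm x a| <= cm * `|a| * `|x|.
Local Notation mulU := (mulU mul).
Local Notation Dp := (Dp d).
Local Notation rmU := (rmU rm).
Local Notation lmU := (lmU lm).
Local Notation PhiB := (PhiB lm rm d).
Local Notation PhiE := (PhiE mul rm d).

Lemma Dp_lin k x y : Dp (addU (scaleU k x) y) = k *: Dp x + Dp y.
Proof. by have [dD [dZ _]] := Hd; rewrite /Dp /= dD dZ. Qed.

Lemma rmU_linx k x y p : rmU (k *: x + y) p = k *: rmU x p + rmU y p.
Proof.
by rewrite /rmU (rmDl HX) (rmZl HX) scalerDr !scalerA mulrC scalerDr scalerA [LHS]addrACA.
Qed.

Lemma lmU_linx k b x y : lmU b (k *: x + y) = k *: lmU b x + lmU b y.
Proof.
by rewrite /lmU (lmDr HX) (lmZr HX) scalerDr !scalerA mulrC scalerDr scalerA [LHS]addrACA.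
Qed.

Lemma rmU_linp k x p q : rmU x (addU (scaleU k p) q) = k *: rmU x p + rmU x q.
Proof.
rewrite /rmU /addU /scaleU /= (rmDr HX) (rmZr HX) scalerDl -scalerA scalerDr.
by rewrite addrACA.
Qed.

Lemma lmU_linp k x p q : lmU (addU (scaleU k p) q) x = k *: lmU p x + lmU q x.
Proof.
rewrite /lmU /addU /scaleU /= (lmDl HX) (lmZl HX) scalerDl -scalerA scalerDr.
by rewrite addrACA.
Qed.

Lemma scalerAC (a b : K) (v : U) : a *: (b *: v) = b *: (a *: v).
Proof. by rewrite !scalerA mulrC. Qed.

Lemma ac6 (V : zmodType) (a b c e f g : V) :
  a + b + (c + e) + (f + g) = a + c + f + (b + e + g).
Proof. by rewrite (addrACA a b c e) (addrACA (a + c) (b + e) f g). Qed.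

Lemma mulU_linl k x y z :
  mulU (addU (scaleU k x) y) z = addU (scaleU k (mulU x z)) (mulU y z).
Proof.
have [mD1 [mD2 [mZ1 [mZ2 _]]]] := HU.
rewrite /mulU /addU /scaleU /=; congr (_, _); last by rewrite mulrDl mulrA.
rewrite mD2 mZ1 scalerDl -scalerA scalerDr !scalerDr.
by rewrite (scalerAC z.2 k) ac6.
Qed.

Lemma mulU_linr k x y z :
  mulU z (addU (scaleU k x) y) = addU (scaleU k (mulU z x)) (mulU z y).
Proof.
have [mD1 [mD2 [mZ1 [mZ2 _]]]] := HU.
rewrite /mulU /addU /scaleU /=; congr (_, _); last by rewrite mulrDr mulrCA.
rewrite mD1 mZ2 scalerDr scalerDl !scalerDr.
by rewrite ac6 (scalerAC z.2 k) -scalerA.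
Qed.

Lemma subU_lin k (x y x' y' : U * K) :
  subU (addU (scaleU k x) y) (addU (scaleU k x') y') =
  addU (scaleU k (subU x x')) (subU y y').
Proof.
rewrite /subU /addU /scaleU /=; congr (_, _).
  by rewrite opprD addrACA scalerBr.
by rewrite opprD addrACA mulrBr.
Qed.

Lemma PhiB_linl k x y z : PhiB (addU (scaleU k x) y) z = k *: PhiB x z + PhiB y z.
Proof.
by rewrite /PhiB Dp_lin rmU_linx lmU_linp scalerBr opprD addrACA.
Qed.

Lemma PhiB_linr k x y z : PhiB z (addU (scaleU k x) y) = k *: PhiB z x + PhiB z y.
Proof.
by rewrite /PhiB Dp_lin rmU_linp lmU_linx scalerBr opprD addrACA.
Qed.

Lemma PhiE_linl ap k x y z : PhiE ap (addU (scaleU k x) y) z = k *: PhiE ap x z + PhiE ap y z.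
Proof. by rewrite /PhiE Dp_lin rmU_linx. Qed.

Lemma PhiE_linr ap k x y z : PhiE ap z (addU (scaleU k x) y) = k *: PhiE ap z x + PhiE ap z y.
Proof. by rewrite /PhiE mulU_linr mulU_linl subU_lin rmU_linp. Qed.

Lemma normU_ge0 (p : U * K) : 0 <= normU p.
Proof. by rewrite addr_ge0. Qed.

Lemma Dp_bound p : `|Dp p| <= cd * normU p.
Proof.
apply: le_trans (Hcd _) _; rewrite ler_wpM2l // lerDl //.
Qed.

Lemma aux_bound (a b c e : K) : 0 <= a -> 0 <= b -> 0 <= c -> 0 <= e ->
  a * b * e + c * e <= (a + 1) * (b + c) * e.
Proof.
move=> a0 b0 c0 e0.
have -> : (a + 1) * (b + c) * e = a * b * e + (a * c * e + b * e + c * e) by ring.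
rewrite lerD2l ler_wpDl // addr_ge0 // ?mulr_ge0 //.
Qed.

Lemma rmU_bound x p : `|rmU x p| <= (cm + 1) * normU p * `|x|.
Proof.
apply: le_trans (ler_normD _ _) _; rewrite normrZ.
apply: le_trans (aux_bound cm0 (normr_ge0 p.1) (normr_ge0 p.2) (normr_ge0 x)).
by rewrite lerD2r.
Qed.

Lemma lmU_bound x p : `|lmU p x| <= (cm + 1) * normU p * `|x|.
Proof.
apply: le_trans (ler_normD _ _) _; rewrite normrZ.
apply: le_trans (aux_bound cm0 (normr_ge0 p.1) (normr_ge0 p.2) (normr_ge0 x)).
by rewrite lerD2r.
Qed.

Lemma normU_mul x y : normU (mulU x y) <= normU x * normU y.
Proof.
have [_ [_ [_ [_ [_ mN]]]]] := HU.
rewrite /normU /mulU /=.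
have -> : (`|x.1| + `|x.2|) * (`|y.1| + `|y.2|) =
  (`|x.1| * `|y.1| + `|x.2| * `|y.1| + `|y.2| * `|x.1|) + `|x.2| * `|y.2| by ring.
rewrite normrM; apply: lerD => //.
apply: le_trans (ler_normD _ _) _; apply: lerD; last by rewrite normrZ.
apply: le_trans (ler_normD _ _) _; apply: lerD => //; by rewrite normrZ.
Qed.

Lemma normU_sub (x y : U * K) : normU (subU x y) <= normU x + normU y.
Proof.
rewrite /normU /subU /= addrACA.
by apply: lerD; apply: le_trans (ler_normB _ _) _.
Qed.

Lemma PhiB_bound b c : `|PhiB b c| <= (2 * (cm + 1) * cd) * (normU b * normU c).
Proof.
apply: le_trans (ler_normB _ _) _.
apply: le_trans (lerD (rmU_bound _ _) (lmU_bound _ _)) _.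
have h1 := Dp_bound b; have h2 := Dp_bound c.
have cm1 : 0 <= cm + 1 by rewrite addr_ge0.
apply: le_trans (lerD (ler_wpM2l (mulr_ge0 cm1 (normU_ge0 c)) h1)
                      (ler_wpM2l (mulr_ge0 cm1 (normU_ge0 b)) h2)) _.
rewrite le_eqVlt; apply/orP; left; apply/eqP; ring.
Qed.

Lemma PhiE_bound ap b c :
  `|PhiE ap b c| <= (2 * (cm + 1) * cd * normU ap) * (normU b * normU c).
Proof.
apply: le_trans (rmU_bound _ _) _.
have cm1 : 0 <= cm + 1 by rewrite addr_ge0.
have hs : normU (subU (mulU ap c) (mulU c ap)) <= 2 * normU ap * normU c.
  apply: le_trans (normU_sub _ _) _.
  apply: le_trans (lerD (normU_mul _ _) (normU_mul _ _)) _.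
  by rewrite le_eqVlt; apply/orP; left; apply/eqP; ring.
apply: le_trans (ler_pM _ _ (ler_wpM2l cm1 hs) (Dp_bound b)) _.
- by rewrite mulr_ge0 // normU_ge0.
- by [].
rewrite le_eqVlt; apply/orP; left; apply/eqP; ring.
Qed.

End Lin.
Section Help.
Variable R : realType.
Local Notation K := (R[i]).

Lemma realC (z : K) : 0 <= z -> z = (complex.Re z)%:C.
Proof. by move=> z0; symmetry; apply: RRe_real; exact: ger0_real. Qed.

Lemma Re_add (x y : K) : complex.Re (x + y) = complex.Re x + complex.Re y.
Proof. by case: x => ? ?; case: y. Qed.

Lemma small_zero (z C : K) : 0 <= C ->
  (forall r : R, 0 < r -> `|z| <= C * r%:C) -> z = 0.
Proof.
move=> C0 h; apply/normr0_eq0; apply/eqP; apply: contraT => nz.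
have zp : 0 < `|z| by rewrite lt_neqAle eq_sym nz normr_ge0.
set zz := complex.Re `|z|; set cc := complex.Re C.
have ez : `|z| = zz%:C by apply: realC.
have ec : C = cc%:C by apply: realC.
have zz0 : 0 < zz by rewrite -ltcR -ez.
have cc0 : 0 <= cc by rewrite -lecR -ec.
have := h (zz / (cc + 1)) (divr_gt0 zz0 (ltr_wpDl cc0 ltr01)).
rewrite ez ec -rmorphM lecR => hle.
have : cc * (zz / (cc + 1)) < zz.
  rewrite mulrA ltr_pdivrMr ?(ltr_wpDl cc0 ltr01) //.
  by rewrite mulrC ltr_pM2l // ltrDl.
by rewrite ltNge hle.
Qed.

Lemma cvg_bound (U X : completeNormedModType K) (V : set U) (b c : nat -> U * K)
  (u : nat -> X) (Lc : K) :
  tensor_rep V b c -> 0 <= Lc ->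
  (forall n, `|u n| <= Lc * (normU (b n) * normU (c n))) -> cvgn (series u).
Proof.
move=> [_ [_ [M hM]]] L0 hu.
have nn : forall n, 0 <= Lc * (normU (b n) * normU (c n)).
  by move=> n; rewrite mulr_ge0 // mulr_ge0 // addr_ge0.
apply: (@abs_cvg R X u (fun n => complex.Re (Lc * (normU (b n) * normU (c n))))
   (complex.Re (Lc * M))).
  by move=> n; rewrite -realC.
move=> N; rewrite -(sum_lin _ _ Re_add).
have : \sum_(0 <= n < N) Lc * (normU (b n) * normU (c n)) <= Lc * M.
  by rewrite -mulr_sumr ler_wpM2l // big_mkord.
by rewrite lecE => /andP[].
Qed.

End Help.
Section UB.
Variable R : realType.
Local Notation K := (R[i]).

Lemma unit_bilin_of (U X : completeNormedModType K) (V : set U)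
  (Phi : U * K -> U * K -> X) (hh : X -> K) (c0 L : K) :
  (forall k x y z, Phi (addU (scaleU k x) y) z = k *: Phi x z + Phi y z) ->
  (forall k x y z, Phi z (addU (scaleU k x) y) = k *: Phi z x + Phi z y) ->
  (forall x y, hh (x + y) = hh x + hh y) -> (forall k x, hh (k *: x) = k * hh x) ->
  (forall x, `|hh x| <= c0 * `|x|) -> 0 <= c0 -> 0 <= L -> c0 * L <= 1 ->
  (forall b c, `|Phi b c| <= L * (normU b * normU c)) ->
  unit_bilin V (fun b c => hh (Phi b c)).
Proof.
move=> l1 l2 hD hZ hN c00 L0 cL hP; split; [|split].
- by move=> k x y z _ _ _; rewrite l1 hD hZ.
- by move=> k x y z _ _ _; rewrite l2 hD hZ.
- move=> x y _ _; apply: le_trans (hN _) _.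
  apply: le_trans (ler_wpM2l c00 (hP x y)) _.
  rewrite mulrA -[X in _ <= X]mul1r ler_wpM2r //.
  by rewrite mulr_ge0 // addr_ge0.
Qed.
End UB.
Section SerH.
Variable R : realType.
Local Notation K := (R[i]).
Variable X : normedModType K.
Implicit Types f g : nat -> X.

Lemma seriesDf f g : series (fun n => f n + g n) = series f + series g.
Proof. by apply: funext => N; rewrite /series /= big_split. Qed.

Lemma seriesBf f g : series (fun n => f n - g n) = series f - series g.
Proof. by apply: funext => N; rewrite /series /= sumrB. Qed.

Lemma cvgS_D f g : cvgn (series f) -> cvgn (series g) ->
  cvgn (series (fun n => f n + g n)).
Proof. by move=> cf cg; rewrite seriesDf; exact: is_cvgD. Qed.

Lemma cvgS_B f g : cvgn (series f) -> cvgn (series g) ->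
  cvgn (series (fun n => f n - g n)).
Proof. by move=> cf cg; rewrite seriesBf; exact: is_cvgB. Qed.

Lemma limS_D f g : cvgn (series f) -> cvgn (series g) ->
  limn (series (fun n => f n + g n)) = limn (series f) + limn (series g).
Proof. by move=> cf cg; rewrite seriesDf limD. Qed.

Lemma limS_B f g : cvgn (series f) -> cvgn (series g) ->
  limn (series (fun n => f n - g n)) = limn (series f) - limn (series g).
Proof. by move=> cf cg; rewrite seriesBf limB. Qed.
End SerH.
Section Final.
Variable R : realType.
Local Notation K := (R[i]).

Lemma final_ineq (z A P2 P1n T r q : K) : 0 <= q -> 0 <= P1n ->
  `|T + T| <= r -> T = A + P2 * z -> `|A| <= q * P1n -> P1n + `|P2 - 1| <= r ->
  `|z| <= (1 + 2 * q + 2 * `|z|) * r.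
Proof.
move=> q0 p0 hT eT hA hP.
have hP1 : P1n <= r by apply: le_trans hP; rewrite lerDl.
have hP2 : `|P2 - 1| <= r by apply: le_trans hP; rewrite lerDr.
have ez : z + z = (T + T) - (A + A) - ((P2 - 1) * z + (P2 - 1) * z) by rewrite eT; ring.
have h1 : `|z| <= `|z + z|.
  by rewrite -mulr2n normrMn mulr2n lerDl.
apply: le_trans h1 _; rewrite ez.
apply: le_trans (ler_normB _ _) _.
apply: le_trans (lerD (ler_normB _ _) (ler_normD _ _)) _.
have hA' : `|A| <= q * r by apply: le_trans hA _; rewrite ler_wpM2l.
have hz : `|(P2 - 1) * z| <= r * `|z| by rewrite normrM ler_wpM2r.
apply: le_trans (lerD (lerD hT (le_trans (ler_normD _ _) (lerD hA' hA'))) (lerD hz hz)) _.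
by rewrite le_eqVlt; apply/orP; left; apply/eqP; ring.
Qed.
End Final.

Section MainV.
Variable R : realType.
Local Notation K := (R[i]).
Variables (U : completeNormedModType K) (mul : U -> U -> U).
Hypothesis HU : banach_algebra mul.
Variables (X : completeNormedModType K) (lm : U -> X -> X) (rm : X -> U -> X).
Hypothesis HX : banach_bimodule mul lm rm.
Variable d : U -> X.
Hypothesis Hd : derivation mul lm rm d.
Hypothesis Hc : central_map lm rm d.
Variables (cd cm : K).
Hypothesis cd0 : 0 <= cd.
Hypothesis cm0 : 0 <= cm.
Hypothesis Hcd : forall a, `|d a| <= cd * `|a|.
Hypothesis Hlm : forall a x, `|lm a x| <= cm * `|a| * `|x|.
Hypothesis Hrm : forall a x, `|rm x a| <= cm * `|a| * `|x|.
Variable V : set U.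
Hypothesis V0 : V 0.
Hypothesis HA : unitization_sym_pseudo_amenable mul V.

Lemma vanish a : V a -> d a = 0.
Proof.
move=> Va; apply/eqP; apply: contraT => nda.
have [h [hD hZ hN ha]] := complex_sep nda.
pose ap : U * K := (a, 0).
have iap : inU V ap by [].
have cm1 : 0 <= cm + 1 by rewrite addr_ge0.
pose L := 2 * (cm + 1) * cd * (normU ap + 1).
have L00 : 0 <= 2 * (cm + 1) * cd by rewrite !mulr_ge0.
have L0 : 0 <= L by rewrite mulr_ge0 // addr_ge0 // normU_ge0.
have LB : forall b c, `|PhiB lm rm d b c| <= L * (normU b * normU c).
  move=> b c; apply: le_trans (PhiB_bound cd0 cm0 Hcd Hlm Hrm b c) _.
  rewrite ler_wpM2r ?mulr_ge0 ?normU_ge0 //.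
  by rewrite /L -{1}(mulr1 (2 * (cm + 1) * cd)) ler_wpM2l // lerDr normU_ge0.
have LE : forall b c, `|PhiE mul rm d ap b c| <= L * (normU b * normU c).
  move=> b c; apply: le_trans (PhiE_bound HU cd0 cm0 Hcd Hrm ap b c) _.
  rewrite ler_wpM2r ?mulr_ge0 ?normU_ge0 //.
  by rewrite /L ler_wpM2l // lerDl.
have L1 : 0 < L + 1 by rewrite ltr_wpDl.
pose kap := (2 * (L + 1))^-1.
have kap0 : 0 < kap by rewrite invr_gt0 mulr_gt0.
pose hh := fun x => kap * h x.
have hhD : forall x y, hh (x + y) = hh x + hh y by move=> x y; rewrite /hh hD mulrDr.
have hhZ : forall k x, hh (k *: x) = k * hh x by move=> k x; rewrite /hh hZ mulrCA.
pose c0 := 2 * kap.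
have c00 : 0 <= c0 by rewrite mulr_ge0 // ltW.
have hhN : forall x, `|hh x| <= c0 * `|x|.
  move=> x; rewrite /hh normrM (gtr0_norm kap0) /c0 -mulrA mulrCA.
  by apply: ler_wpM2l; [exact: ltW | exact: hN].
have c0L : c0 * L <= 1.
  have -> : c0 * L = L / (L + 1).
    by rewrite /c0 /kap; field; exact: lt0r_neq0.
  by rewrite (ler_pdivrMr _ _ L1) mul1r lerDl.
have ubB : unit_bilin V (fun b c => hh (PhiB lm rm d b c)).
  exact: (@unit_bilin_of R U X V (PhiB lm rm d) hh c0 L (PhiB_linl HX Hd) (PhiB_linr HX Hd) hhD hhZ hhN c00 L0 c0L LB).
have ubE : unit_bilin V (fun b c => hh (PhiE mul rm d ap b c)).
  exact: (@unit_bilin_of R U X V (PhiE mul rm d ap) hh c0 L (@PhiE_linl R U mul X lm rm HX d Hd ap) (@PhiE_linr R U mul HU X lm rm HX d ap) hhD hhZ hhN c00 L0 c0L LE).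
have [I [le [bb [cc [_ [_ [ldir [trep [sym [c6 c7]]]]]]]]]] := HA.
have Dpa : Dp d ap = d a by [].
pose z := hh (d a).
have z0 : z != 0 by rewrite /z /hh mulf_neq0 // gt_eqF.
pose q := c0 * (cm * `|d a|).
have q0 : 0 <= q by rewrite /q mulr_ge0 // mulr_ge0.
suff : z = 0 by move/eqP; rewrite (negbTE z0).
apply: (@small_zero R z (1 + 2 * q + 2 * `|z|)).
  by rewrite !addr_ge0 // mulr_ge0.
move=> r r0.
have e0 : 0 < r%:C by rewrite ltcR.
have [i0 h6] := c6 ap iap r%:C e0.
have i01 : inU V ((0 : U), (1 : K)) by [].
have [i1 h7] := c7 _ i01 r%:C e0.
have [k [l0 l1]] := ldir i0 i1.
have {h6}h6 := h6 k l0; have {h7}h7 := h7 k l1.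
have tr := trep k; have ssym := sym k.
move: h6 h7 ssym tr; set b := bb k; set c := cc k => h6 h7 ssym tr.
have nb : forall n, 0 <= normU (b n) by move=> n; exact: normU_ge0.
have nc : forall n, 0 <= normU (c n) by move=> n; exact: normU_ge0.
pose u1 := fun n => PhiB lm rm d (mulU mul ap (b n)) (c n).
pose u2 := fun n => PhiB lm rm d (b n) (mulU mul (c n) ap).
pose u3 := fun n => rmU rm (Dp d ap) (mulU mul (b n) (c n)).
pose u4 := fun n => PhiE mul rm d ap (b n) (c n).
pose u5 := fun n => PhiE mul rm d ap (c n) (b n).
have nap := normU_ge0 ap.
have cv1 : cvgn (series u1).
  apply: (cvg_bound (Lc := L * normU ap) tr); first by rewrite mulr_ge0.
  move=> n; apply: le_trans (LB _ _) _; rewrite -mulrA; apply: ler_wpM2l => //.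
  rewrite mulrA; apply: ler_wpM2r; first exact: nc.
  exact: (@normU_mul R U mul HU ap (b n)).
have cv2 : cvgn (series u2).
  apply: (cvg_bound (Lc := L * normU ap) tr); first by rewrite mulr_ge0.
  move=> n; apply: le_trans (LB _ _) _.
  apply: le_trans (_ : L * (normU (b n) * (normU (c n) * normU ap)) <= _).
    apply: ler_wpM2l => //; apply: ler_wpM2l; first exact: nb.
    exact: (@normU_mul R U mul HU (c n) ap).
  by rewrite le_eqVlt; apply/orP; left; apply/eqP; ring.
have cv3 : cvgn (series u3).
  apply: (cvg_bound (Lc := (cm + 1) * `|d a|) tr); first by rewrite mulr_ge0.
  move=> n; apply: le_trans (rmU_bound cm0 Hrm _ _) _.
  rewrite Dpa mulrAC [X in _ <= X]mulrC [X in _ <= X]mulrC.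
  apply: ler_wpM2l; first by rewrite mulr_ge0.
  exact: (@normU_mul R U mul HU (b n) (c n)).
have cv4 : cvgn (series u4) by apply: (cvg_bound (Lc := L) tr) => // n; apply: LE.
have cv5 : cvgn (series u5).
  by apply: (cvg_bound (Lc := L) tr) => // n; rewrite [X in _ <= L * X]mulrC; apply: LE.
have eid : (fun n => u1 n - u2 n) = (fun n => u3 n + u3 n + u4 n - u5 n).
  by apply: funext => n; exact: (key_identity HX Hd Hc ap (b n) (c n)).
have elim : limn (series u1) - limn (series u2) =
   limn (series u3) + limn (series u3) + limn (series u4) - limn (series u5).
  rewrite -limS_B // eid.
  have c33 := cvgS_D cv3 cv3.
  have c334 := cvgS_D c33 cv4.
  by rewrite (limS_B c334 cv5) (limS_D c33 cv4) (limS_D cv3 cv3).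
have hhb : forall x, `|hh x| <= c0 * `|x| by [].
have te1 : tensor_eval (fun b c => hh (PhiB lm rm d b c)) (fun n => mulU mul ap (b n)) c
   = hh (limn (series u1)) by rewrite /tensor_eval (@lin_lim R X R[i]^o hh _ _ hhD hhN cv1).2.
have te2 : tensor_eval (fun b c => hh (PhiB lm rm d b c)) b (fun n => mulU mul (c n) ap)
   = hh (limn (series u2)) by rewrite /tensor_eval (@lin_lim R X R[i]^o hh _ _ hhD hhN cv2).2.
have te4 : tensor_eval (fun b c => hh (PhiE mul rm d ap b c)) b c
   = hh (limn (series u4)) by rewrite /tensor_eval (@lin_lim R X R[i]^o hh _ _ hhD hhN cv4).2.
have te5 : tensor_eval (fun b c => hh (PhiE mul rm d ap b c)) c b
   = hh (limn (series u5)) by rewrite /tensor_eval (@lin_lim R X R[i]^o hh _ _ hhD hhN cv5).2.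
have H6 := h6 _ ubB; rewrite te1 te2 in H6.
have H5 := ssym _ ubE; rewrite te4 te5 in H5.
have hhB := sub_lin hhD.
rewrite -hhB elim hhB !hhD H5 addrK in H6.
pose p1 := fun n => (mulU mul (b n) (c n)).1.
pose p2 := fun n => (mulU mul (b n) (c n)).2.
have nmul : forall n, normU (mulU mul (b n) (c n)) <= 1 * (normU (b n) * normU (c n)).
  by move=> n; rewrite mul1r; exact: (@normU_mul R U mul HU (b n) (c n)).
have cvp1 : cvgn (series p1).
  apply: (cvg_bound (Lc := 1) tr) => // n; apply: le_trans (nmul n).
  by rewrite /normU lerDl.
have cvq : cvgn (series (fun n => p2 n *: d a)).
  apply: (cvg_bound (Lc := `|d a|) tr) => // n.
  rewrite normrZ mulrC; apply: ler_wpM2l => //; rewrite -[X in _ <= X]mul1r.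
  by apply: le_trans (nmul n); rewrite /normU lerDr.
have cvp2 : cvgn (series (p2 : nat -> R[i]^o)).
  have h1 := (@lin_lim R X R[i]^o hh _ _ hhD hhN cvq).1.
  have addf : forall x y : R[i]^o, (x + y) / z = x / z + y / z by move=> x y; rewrite mulrDl.
  have bnd : forall x : R[i]^o, `|x / z| <= `|z^-1| * `|x| by move=> x; rewrite normrM mulrC.
  have h2 := (@lin_lim R R[i]^o R[i]^o (fun w => w / z) _ _ addf bnd h1).1.
  suff <- : (fun n => hh (p2 n *: d a) / z) = p2 by [].
  by apply: funext => n; rewrite hhZ mulfK.
pose P1 := limn (series p1).
pose P2 := limn (series (p2 : nat -> R[i]^o)).
have rmD : forall x y, rm (d a) (x + y) = rm (d a) x + rm (d a) y.
  by move=> x y; exact: (rmDr HX).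
have rmN : forall x, `|rm (d a) x| <= (cm * `|d a|) * `|x|.
  by move=> x; apply: le_trans (Hrm _ _) _; rewrite le_eqVlt; apply/orP; left; apply/eqP; ring.
have [cr1 lr1] := (@lin_lim R U X (rm (d a)) _ _ rmD rmN cvp1).
have scD : forall x y : R[i]^o, (x + y) *: d a = x *: d a + y *: d a.
  by move=> x y; rewrite scalerDl.
have scN : forall x : R[i]^o, `|x *: d a| <= `|d a| * `|x|.
  by move=> x; rewrite normrZ mulrC.
have [cr2 lr2] := (@lin_lim R R[i]^o X (fun w => w *: d a) _ _ scD scN cvp2).
have l3E : limn (series u3) = rm (d a) P1 + P2 *: d a.
  have -> : u3 = (fun n => rm (d a) (p1 n) + p2 n *: d a) by [].
  by rewrite limS_D // lr1 lr2.
rewrite l3E hhD hhZ -/z in H6.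
have h7' : `|P1| + `|P2 - 1| <= r%:C.
  move: h7; rewrite /tensor_pi -/P1 /normU /subU /mulU /=.
  have m0 : mul P1 0 = 0.
    apply: add0_lin => x y; have [hm _] := HU; exact: hm.
  by rewrite m0 scaler0 scale1r !add0r subr0 mulr1.
apply: (final_ineq q0 (normr_ge0 P1) H6 erefl _ h7').
apply: le_trans (hhN _) _; rewrite /q -[X in _ <= X]mulrA.
by apply: ler_wpM2l; [exact: c00 | exact: rmN].
Qed.
End MainV.
Unset Implicit Arguments. Set Strict Implicit.
Theorem corollary6p2 (R : realType)
  (U : completeNormedModType R[i]) (mul : U -> U -> U)
  (HU : banach_algebra mul)
  (Hgen : gen_closed_subalgebra mul
            (\bigcup_(V in [set V | closed_subalgebra mul V /\
                                    unitization_sym_pseudo_amenable mul V]) V)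
          = setT)
  (X : completeNormedModType R[i]) (lm : U -> X -> X) (rm : X -> U -> X)
  (HX : banach_bimodule mul lm rm)
  (d : U -> X) (Hd : derivation mul lm rm d) (Hb : bounded_map d)
  (Hc : central_map lm rm d) :
  forall a : U, d a = 0.
Proof.
have [Cd hCd] := Hb.
have Hcd := bound_abs hCd.
have cd0 : 0 <= `|Cd| by [].
have [Cm hCm] : exists C : R[i], forall a x, `|lm a x| <= C * `|a| * `|x| /\ `|rm x a| <= C * `|a| * `|x|.
  by do 7 case: HX => _ HX.
have babs : forall (y : X) (a : U) (x : X), `|y| <= Cm * `|a| * `|x| -> `|y| <= `|Cm| * `|a| * `|x|.
  move=> y a' x hy; have h0 : 0 <= Cm * `|a'| * `|x| by apply: le_trans hy.
  by rewrite -(normr_id a') -(normr_id x) -!normrM ger0_norm.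
have Hlm : forall a x, `|lm a x| <= `|Cm| * `|a| * `|x|.
  by move=> a' x; apply: babs; case: (hCm a' x).
have Hrm : forall a x, `|rm x a| <= `|Cm| * `|a| * `|x|.
  by move=> a' x; apply: babs; case: (hCm a' x).
have cm0 : 0 <= `|Cm| by [].
have [dD [dZ dM]] := Hd.
have d0 : d 0 = 0 := add0_lin dD.
pose W := [set x | d x = 0].
have clW : closed W.
  move=> x clx; rewrite /W /=; apply/normr0_eq0.
  apply: (@small_zero R `|d x| `|Cd| cd0) => r r0.
  have e0 : 0 < r%:C by rewrite ltcR.
  have [y [Wy bxy]] := clx _ (nbhsx_ballx x _ e0).
  rewrite -ball_normE /= in bxy.
  rewrite normr_id; have -> : d x = d (x - y) by rewrite (sub_lin dD) Wy subr0.
  apply: le_trans (Hcd _) _; apply: ler_wpM2l => //; exact: ltW.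
have subW : closed_subalgebra mul W.
  split => //; split => //; split; [|split].
  - by move=> x y Wx Wy; rewrite /W /= dD Wx Wy addr0.
  - by move=> k x Wx; rewrite /W /= dZ Wx scaler0.
  - move=> x y Wx Wy; rewrite /W /= dM Wx Wy.
    rewrite (add0_lin (fun u v => lmDr HX x u v)).
    by rewrite (add0_lin (fun u v => rmDl HX y u v)) addr0.
have unW : \bigcup_(V in [set V | closed_subalgebra mul V /\
                                    unitization_sym_pseudo_amenable mul V]) V `<=` W.
  move=> x [V [cV aV] Vx].
  have V0 : V 0 by case: cV => _ [].
  exact: (vanish HU HX Hd Hc cd0 cm0 Hcd Hlm Hrm V0 aV Vx).
move=> a; have : gen_closed_subalgebra mul
            (\bigcup_(V in [set V | closed_subalgebra mul V /\
                                    unitization_sym_pseudo_amenable mul V]) V) a.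
  by rewrite Hgen.
by move=> /(_ W (conj subW unW)).
Qed.
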